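(* Let $A=\sigma(R)\langle x_1,\dots,x_n\rangle$ be a bijective skew PBW extension over a ring $R$, with associated endomorphisms $\sigma_i$ and $\sigma_i$-derivations $\delta_i$. Then the opposite ring $A^{\mathrm{op}}$ is a bijective skew PBW extension over $R^{\mathrm{op}}$. Moreover, for $A^{\mathrm{op}}$ the associated automorphisms are $\sigma_i^{\mathrm{op}}:R^{\mathrm{op}}\to R^{\mathrm{op}}$, $\sigma_i^{\mathrm{op}}(r)=\sigma_i^{-1}(r)$, and the associated $\sigma_i^{\mathrm{op}}$-derivations are $\delta_i^{\mathrm{op}}:R^{\mathrm{op}}\to R^{\mathrm{op}}$, $\delta_i^{\mathrm{op}}(r)=-\delta_i(\sigma_i^{-1}(r))$, for $r\in R^{\mathrm{op}}$, $1\le i\le n$.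
   Context: Rings are associative with unity, not necessarily commutative. Given rings $R\subseteq A$, $A$ is a skew PBW extension over $R$, written $A=\sigma(R)\langle x_1,\dots,x_n\rangle$, if: (i) $R\subseteq A$; (ii) there are elements $x_1,\dots,x_n\in A$ such that $A$ is a free left $R$-module with basis $\mathrm{Mon}(A)=\{x_1^{\alpha_1}\cdots x_n^{\alpha_n}\mid (\alpha_1,\dots,\alpha_n)\in\mathbb{N}^n\}$; (iii) for each $1\le i\le n$ and each $r\in R\setminus\{0\}$ there is $c_{i,r}\in R\setminus\{0\}$ with $x_ir-c_{i,r}x_i\in R$; (iv) for all $1\le i,j\le n$ there is $c_{i,j}\in R\setminus\{0\}$ with $x_jx_i-c_{i,j}x_ix_j\in R+Rx_1+\cdots+Rx_n$. For such $A$, for each $i$ there exist an injective ring endomorphism $\sigma_i$ of $R$ and a $\sigma_i$-derivation $\delta_i$ of $R$ (i.e. additive with $\delta_i(rs)=\sigma_i(r)\delta_i(s)+\delta_i(r)s$) such that $x_ir=\sigma_i(r)x_i+\delta_i(r)$ for all $r\in R$. $A$ is called bijective if every $\sigma_i$ is bijective and the elements $c_{i,j}$ are invertible for $1\le i<j\le n$. The opposite ring $B^{\mathrm{op}}$ of $B$ has the same additive group and product $a*b=ba$. *)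

(* Defs.v *)
From HB Require Import structures.
From mathcomp Require Import all_boot all_order all_algebra.
Set Implicit Arguments. Unset Strict Implicit. Unset Printing Implicit Defensive.
Import GRing.Theory.
Local Open Scope ring_scope.

(* The base ring R is modelled as a subring S (a predicate closed under
   1, subtraction and multiplication) of the (possibly noncommutative)
   ring A.  The opposite ring of A is MathComp's converse ring A^c, and
   R^op is then the same predicate S viewed inside A^c. *)

Section SkewPBW.
Variables (A : nzRingType) (S : pred A) (n : nat) (x : 'I_n -> A).

Definition monom (a : n.-tuple nat) : A := \prod_(i < n) x i ^+ (tnth a i).

Definition mon_spans : Prop :=
  forall a : A, exists (s : seq (n.-tuple nat)) (c : n.-tuple nat -> A),
    (forall al, c al \in S) /\ a = \sum_(al <- s) c al * monom al.

Definition mon_free : Prop :=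
  forall (s : seq (n.-tuple nat)) (c : n.-tuple nat -> A),
    uniq s -> (forall al, c al \in S) ->
    \sum_(al <- s) c al * monom al = 0 ->
    forall al, al \in s -> c al = 0.

Definition in_lin (a : A) : Prop :=
  exists (r0 : A) (r : 'I_n -> A),
    r0 \in S /\ (forall k, r k \in S) /\ a = r0 + \sum_(k < n) r k * x k.

Definition skewPBW : Prop :=
  [/\ subring_closed S,
      mon_spans, mon_free,
      (forall (i : 'I_n) (r : A), r \in S -> r != 0 ->
          exists c, [/\ c \in S, c != 0 & x i * r - c * x i \in S])
    & (forall i j : 'I_n,
          exists c, [/\ c \in S, c != 0 & in_lin (x j * x i - c * x i * x j)])].

(* sigma, delta (maps A -> A, only their values on S matter) are the
   endomorphism and sigma-derivation associated to x_i:
   x_i r = sigma(r) x_i + delta(r) for all r in R. *)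
Definition assoc_maps (i : 'I_n) (sigma delta : A -> A) : Prop :=
  forall r, r \in S -> [/\ sigma r \in S, delta r \in S &
                           x i * r = sigma r * x i + delta r].

Definition bijective_on_S (sigma : A -> A) : Prop :=
  {in S &, injective sigma} /\ (forall s, s \in S -> exists2 r, r \in S & sigma r = s).

Definition unit_in_S (c : A) : Prop :=
  exists2 d, d \in S & c * d = 1 /\ d * c = 1.

Definition bijective_skewPBW : Prop :=
  [/\ skewPBW,
      (forall i : 'I_n, exists sigma delta,
          assoc_maps i sigma delta /\ bijective_on_S sigma)
    & (forall i j : 'I_n, (i < j)%N ->
          exists c, [/\ c \in S, unit_in_S c & in_lin (x j * x i - c * x i * x j)])].

End SkewPBW.

(* Main.v *)
Require Import Defs.
From HB Require Import structures.
From mathcomp Require Import all_boot all_order all_algebra.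
From Stdlib Require Import IndefiniteDescription.
Set Implicit Arguments. Unset Strict Implicit. Unset Printing Implicit Defensive.
Import GRing.Theory.
Local Open Scope ring_scope.

Definition leo (n : nat) (a b : 'I_n) := (a <= b)%N.

Lemma leo_trans n : transitive (@leo n).
Proof. by move=> a b c; apply: leq_trans. Qed.

Lemma leo_anti n : antisymmetric (@leo n).
Proof. by move=> a b /anti_leq /val_inj. Qed.

Definition word (n : nat) (al : n.-tuple nat) : seq 'I_n :=
  flatten [seq nseq (tnth al k) k | k <- index_enum 'I_n].

Definition cnt (n : nat) (w : seq 'I_n) : n.-tuple nat :=
  [tuple count_mem k w | k < n].

Definition Pw (R : nzRingType) (n : nat) (x : 'I_n -> R) (w : seq 'I_n) : R :=
  \prod_(k <- w) x k.

Lemma monomE (R : nzRingType) (n : nat) (x : 'I_n -> R) al :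
  monom x al = Pw x (word al).
Proof.
rewrite /monom /Pw /word big_flatten /= big_map.
apply: eq_bigr => k _; rewrite big_nseq.
elim: (tnth al k) => [|m IH] /=; first by rewrite expr0.
by rewrite exprS IH.
Qed.

Lemma count_word n (al : n.-tuple nat) k : count_mem k (word al) = tnth al k.
Proof.
rewrite /word count_flatten sumnE big_map big_map.
rewrite (bigD1 k) //= count_nseq /= eqxx mul1n big1 ?addn0 // => j /negbTE.
by rewrite count_nseq /= eq_sym => ->.
Qed.

Lemma cnt_word n (al : n.-tuple nat) : cnt (word al) = al.
Proof. by apply: eq_from_tnth => k; rewrite tnth_mktuple count_word. Qed.

Lemma pairwise_flat n (f : 'I_n -> nat) (s : seq 'I_n) :
  sorted ltn (map val s) -> pairwise (@leo n) (flatten [seq nseq (f k) k | k <- s]).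
Proof.
elim: s => [|k s IH] //= Hs.
rewrite pairwise_cat; apply/and3P; split.
- apply/allrelP => a b /nseqP [-> _] /flattenP [t /mapP [j js ->]] /nseqP [-> _].
  move: Hs; rewrite (path_sortedE ltn_trans) => /andP [/allP H _].
  by apply: ltnW; apply: H; apply: map_f.
- elim: (f k) => [|m IHm] //=; rewrite IHm andbT.
  by rewrite all_nseq /leo leqnn orbT.
- by apply: IH; apply: (path_sorted Hs).
Qed.

Lemma word_sorted n (al : n.-tuple nat) : sorted (@leo n) (word al).
Proof.
rewrite (sorted_pairwise (@leo_trans n)) /word.
apply: pairwise_flat.
by rewrite [index_enum _]unlock -enumT val_enum_ord iota_ltn_sorted.
Qed.

Lemma word_cnt n (w : seq 'I_n) : sorted (@leo n) w -> word (cnt w) = w.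
Proof.
move=> Hw; apply: (sorted_eq (@leo_trans n) (@leo_anti n)) => //.
  exact: word_sorted.
by apply/allP => y _; rewrite /= count_word tnth_mktuple.
Qed.

Lemma word_inj n : injective (@word n).
Proof. by move=> a b E; rewrite -(cnt_word a) -(cnt_word b) E. Qed.

Lemma PwE (R : nzRingType) n (x : 'I_n -> R) i w : Pw x (i :: w) = x i * Pw x w.
Proof. by rewrite /Pw big_cons. Qed.

Lemma Pw_nil (R : nzRingType) n (x : 'I_n -> R) : Pw x [::] = 1.
Proof. by rewrite /Pw big_nil. Qed.

Lemma Pw_conv (R : nzRingType) n (x : 'I_n -> R) w :
  Pw (x : 'I_n -> R^c) w = Pw x (rev w).
Proof. by rewrite /Pw rev_big_rev. Qed.

Section Main.
Variables (A : nzRingType) (S : pred A) (n : nat) (x : 'I_n -> A).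
Variables (sig del sinv : 'I_n -> A -> A).
Hypothesis HS : subring_closed S.
Hypothesis Hfree : mon_free S x.
Hypothesis Hass : forall i, assoc_maps S x i (sig i) (del i).
Hypothesis Hinj : forall i, {in S &, injective (sig i)}.
Hypothesis Hsinv : forall i r, r \in S -> sinv i r \in S /\ sig i (sinv i r) = r.
Hypothesis Hcomm : forall i j : 'I_n, (i < j)%N ->
  exists c, [/\ c \in S, unit_in_S S c & in_lin S x (x j * x i - c * x i * x j)].

Lemma S1 : 1 \in S. Proof. by case: HS. Qed.
Lemma SB a b : a \in S -> b \in S -> a - b \in S.
Proof. by case: HS => _ H _; apply: H. Qed.
Lemma SM a b : a \in S -> b \in S -> a * b \in S.
Proof. by case: HS => _ _ H; apply: H. Qed.
Lemma S0 : 0 \in S. Proof. by rewrite -(subrr 1) SB ?S1. Qed.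
Lemma SN a : a \in S -> - a \in S. Proof. by move=> H; rewrite -sub0r SB ?S0. Qed.
Lemma SD a b : a \in S -> b \in S -> a + b \in S.
Proof. by move=> Ha Hb; rewrite -(opprK b) SB ?SN. Qed.
Lemma Ssum (I : Type) (r : seq I) (P : pred I) (F : I -> A) :
  (forall i, P i -> F i \in S) -> \sum_(i <- r | P i) F i \in S.
Proof. by move=> H; apply: (big_ind (fun y => y \in S)); [exact: S0 | exact: SD | exact: H]. Qed.

Definition srt (w : seq 'I_n) := sorted (@leo n) w.
Definition evalL (l : seq (A * seq 'I_n)) := \sum_(p <- l) p.1 * Pw x p.2.
Definition okL d (p : A * seq 'I_n) := [&& p.1 \in S, srt p.2 & (size p.2 < d)%N].
Definition B d a := exists l, all (okL d) l /\ a = evalL l.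

Lemma B0 d : B d 0.
Proof. by exists [::]; rewrite /evalL big_nil. Qed.

Lemma BD d a b : B d a -> B d b -> B d (a + b).
Proof.
move=> [l1 [H1 ->]] [l2 [H2 ->]]; exists (l1 ++ l2).
by rewrite all_cat H1 H2 /evalL big_cat.
Qed.

Lemma BM d r a : r \in S -> B d a -> B d (r * a).
Proof.
move=> Hr [l [H ->]]; exists [seq (r * p.1, p.2) | p <- l]; split.
  rewrite all_map; apply/allP => p /(allP H) /and3P [H1 H2 H3].
  by rewrite /= /okL /= H2 H3 SM ?andbT.
by rewrite /evalL big_map mulr_sumr; apply: eq_bigr => p _; rewrite mulrA.
Qed.

Lemma BN d a : B d a -> B d (- a).
Proof. by move=> H; rewrite -mulN1r; apply: BM => //; apply: SN; exact: S1. Qed.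

Lemma BB d a b : B d a -> B d b -> B d (a - b).
Proof. by move=> Ha Hb; apply: BD => //; apply: BN. Qed.

Lemma Bmono d e a : (d <= e)%N -> B d a -> B e a.
Proof.
move=> de [l [H ->]]; exists l; split => //.
apply/allP => p /(allP H) /and3P [H1 H2 H3].
by rewrite /okL H1 H2 (leq_trans H3 de).
Qed.

Lemma Bnil a : B 0 a -> a = 0.
Proof.
by move=> [[|p l] [H ->]]; rewrite /evalL ?big_nil //; move: H => /= /andP [/and3P [_ _]].
Qed.

Lemma Bw r w : r \in S -> srt w -> B (size w).+1 (r * Pw x w).
Proof.
move=> Hr Hw; exists [:: (r, w)]; split; first by rewrite /= /okL Hr Hw leqnn.
by rewrite /evalL big_cons big_nil addr0.
Qed.

Lemma Bsum d (I : eqType) (r : seq I) (F : I -> A) :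
  (forall i, i \in r -> B d (F i)) -> B d (\sum_(i <- r) F i).
Proof.
move=> H; rewrite big_seq; apply: (big_ind (B d)); [exact: B0 | exact: BD | exact: H].
Qed.

Lemma sum_pred1_seq (I : eqType) (r : seq I) a (F : I -> A) :
  uniq r -> a \in r -> \sum_(i <- r | a == i) F i = F a.
Proof.
rewrite (eq_bigl (fun i => i == a)); last by move=> i; rewrite eq_sym.
by move=> u ar; rewrite -big_filter filter_pred1_uniq // big_cons big_nil addr0.
Qed.

Lemma Uniq l : all (fun p => (p.1 \in S) && srt p.2) l -> evalL l = 0 ->
  forall t, srt t -> \sum_(p <- l | p.2 == t) p.1 = 0.
Proof.
move=> Hl E t Ht.
pose L := undup [seq cnt p.2 | p <- l].
pose c al := \sum_(p <- l | cnt p.2 == al) p.1.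
have HL : \sum_(al <- L) c al * monom x al = 0.
  rewrite -[RHS]E /evalL.
  transitivity (\sum_(al <- L) \sum_(p <- l) (if cnt p.2 == al then p.1 * monom x al else 0)).
    apply: eq_bigr => al _; rewrite /c mulr_suml big_mkcond /=.
    by apply: eq_bigr => p _; case: ifP => //; rewrite mul0r.
  rewrite exchange_big /= big_seq [RHS]big_seq; apply: eq_bigr => p pl.
  rewrite -big_mkcond /= sum_pred1_seq ?undup_uniq //.
    move: (allP Hl p pl) => /andP [_ Hs].
    by rewrite monomE word_cnt.
  by rewrite mem_undup; apply: map_f.
have Hc : forall al, c al \in S.
  move=> al; rewrite /c big_seq_cond; apply: Ssum => p /andP [pl _].
  by case/andP: (allP Hl p pl).
have Hz : forall al, al \in L -> c al = 0 := Hfree (undup_uniq _) Hc HL.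
transitivity (c (cnt t)).
  rewrite /c big_seq_cond [RHS]big_seq_cond; apply: eq_bigl => p.
  case pl: (p \in l) => //=.
  case/andP: (allP Hl p pl) => _ Hs.
  apply/eqP/eqP => [->|E2] //.
  by rewrite -(word_cnt Hs) -(word_cnt Ht) E2.
case: (boolP (cnt t \in L)) => [/Hz //| nL].
rewrite /c big_seq_cond big1 // => p /andP [pl /eqP E2].
by case/negP: nL; rewrite mem_undup -E2; apply: (map_f (fun p : A * seq _ => cnt p.2)).
Qed.

Lemma lin1 i a b a' b' : a \in S -> b \in S -> a' \in S -> b' \in S ->
  a * x i + b = a' * x i + b' -> a = a'.
Proof.
move=> Ha Hb Ha' Hb' E.
have := @Uniq [:: (a - a', [:: i]); (b - b', [::])] _ _ [:: i] isT.
rewrite !big_cons big_nil /= eqxx addr0 => H; apply/eqP; rewrite -subr_eq0; apply/eqP; apply: H.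
  by rewrite !SB.
rewrite /evalL !big_cons big_nil PwE !Pw_nil !mulr1 addr0 !mulrBl.
by rewrite addrACA -opprD E subrr.
Qed.

Lemma sigS i r : r \in S -> sig i r \in S. Proof. by case/(Hass i). Qed.
Lemma delS i r : r \in S -> del i r \in S. Proof. by case/(Hass i). Qed.
Lemma sigE i r : r \in S -> x i * r = sig i r * x i + del i r. Proof. by case/(Hass i). Qed.

Lemma sig0 i : sig i 0 = 0.
Proof.
symmetry; apply: (@lin1 i 0 0 (sig i 0) (del i 0)); rewrite ?S0 ?sigS ?delS ?S0 //.
by rewrite mul0r addr0 -sigE ?S0 // mulr0.
Qed.

Lemma sig1 i : sig i 1 = 1.
Proof.
symmetry; apply: (@lin1 i 1 0 (sig i 1) (del i 1)); rewrite ?S0 ?S1 ?sigS ?delS ?S1 //.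
by rewrite mul1r addr0 -sigE ?S1 // mulr1.
Qed.

Lemma sigM i r s : r \in S -> s \in S -> sig i (r * s) = sig i r * sig i s.
Proof.
move=> Hr Hs; symmetry.
apply: (@lin1 i _ (sig i r * del i s + del i r * s) _ (del i (r * s))).
- by rewrite SM ?sigS.
- by rewrite SD ?SM ?sigS ?delS.
- by rewrite sigS ?SM.
- by rewrite delS ?SM.
rewrite -mulrA addrA -mulrDr -(sigE i Hs) mulrA -mulrDl -(sigE i Hr) -mulrA.
by rewrite -sigE ?SM.
Qed.

Definition US u := u \in S /\ unit_in_S S u.

Lemma US1 : US 1.
Proof. by split; [exact: S1 | exists 1; rewrite ?S1 ?mulr1]. Qed.

Lemma USM u v : US u -> US v -> US (u * v).
Proof.
move=> [Hu [u' Hu' [E1 E2]]] [Hv [v' Hv' [F1 F2]]]; split; first exact: SM.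
exists (v' * u'); first exact: SM.
split; first by rewrite mulrA -(mulrA u) F1 mulr1 E1.
by rewrite mulrA -(mulrA v') E2 mulr1 F2.
Qed.

Lemma USsig i u : US u -> US (sig i u).
Proof.
move=> [Hu [u' Hu' [E1 E2]]]; split; first exact: sigS.
exists (sig i u'); first exact: sigS.
by rewrite -!sigM // E1 E2 sig1.
Qed.

Lemma US_nz u : US u -> u != 0.
Proof.
move=> [_ [u' _ [E1 _]]]; apply/eqP => E; move: E1; rewrite E mul0r.
by move/eqP; rewrite eq_sym oner_eq0.
Qed.

Lemma sinvS i r : r \in S -> sinv i r \in S. Proof. by case/(Hsinv i). Qed.
Lemma sinvK i r : r \in S -> sig i (sinv i r) = r. Proof. by case/(Hsinv i). Qed.
Lemma sig_sinv i r : r \in S -> sinv i (sig i r) = r.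
Proof.
move=> Hr; have H := Hinj (i := i) (x := sinv i (sig i r)) (y := r).
by apply: H; rewrite ?sinvS ?sigS ?sinvK ?sigS.
Qed.
Lemma sinv0 i : sinv i 0 = 0.
Proof. by rewrite -{1}(sig0 i) sig_sinv // S0. Qed.
Lemma sinvM i r s : r \in S -> s \in S -> sinv i (r * s) = sinv i r * sinv i s.
Proof.
move=> Hr Hs; have H := Hinj (i := i) (x := sinv i (r * s)) (y := sinv i r * sinv i s).
apply: H; rewrite ?sinvS ?SM ?sinvS //.
by rewrite sigM ?sinvS // !sinvK ?SM.
Qed.
Lemma sinv1 i : sinv i 1 = 1.
Proof. by rewrite -{1}(sig1 i) sig_sinv // S1. Qed.

Lemma USsinv i u : US u -> US (sinv i u).
Proof.
move=> [Hu [u' Hu' [E1 E2]]]; split; first exact: sinvS.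
exists (sinv i u'); first exact: sinvS.
by rewrite -!sinvM // E1 E2 sinv1.
Qed.

Definition InsP s := forall i, exists t u,
  [/\ srt t, perm_eq t (i :: s), US u & B (size s).+1 (x i * Pw x s - u * Pw x t)].

Lemma Bw1 w : srt w -> B (size w).+1 (Pw x w).
Proof. by move=> Hw; rewrite -[Pw x w]mul1r; apply: Bw => //; exact: S1. Qed.

Lemma ins_B s : srt s -> InsP s -> forall k, B (size s).+2 (x k * Pw x s).
Proof.
move=> Hs H k; case: (H k) => t [u [Ht Hp [Hu _] Hb]].
rewrite -(subrK (u * Pw x t) (x k * Pw x s)); apply: BD.
  exact: (Bmono (leqnSn _) Hb).
by have := Bw Hu Ht; rewrite (perm_size Hp).
Qed.

Lemma B2_of d : (forall s, srt s -> (size s < d)%N -> InsP s) ->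
  forall i a, B d a -> B d.+1 (x i * a).
Proof.
move=> H i a [l [Hl ->]]; rewrite /evalL mulr_sumr; apply: Bsum => p pl.
case/and3P: (allP Hl p pl) => Hr Hs Hsz.
rewrite mulrA sigE // mulrDl; apply: BD.
  rewrite -mulrA; apply: BM; first exact: sigS.
  exact: (Bmono _ (ins_B Hs (H _ Hs Hsz) i)).
exact: (Bmono (leq_trans Hsz (leqnSn _)) (Bw (delS i Hr) Hs)).
Qed.

Lemma linB l s : in_lin S x l -> srt s -> InsP s -> B (size s).+2 (l * Pw x s).
Proof.
move=> [r0 [r [Hr0 [Hr ->]]]] Hs H; rewrite mulrDl mulr_suml; apply: BD.
  exact: (Bmono (leqnSn _) (Bw Hr0 Hs)).
apply: Bsum => k _; rewrite -mulrA; apply: BM => //; exact: ins_B.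
Qed.

Lemma ins_all N : forall s, srt s -> (size s < N)%N -> InsP s.
Proof.
elim: N => [//|N IH] s Hs Hsz i.
case: s Hs Hsz => [|j s'] Hs Hsz.
  exists [:: i], 1; split; [done | exact: perm_refl | exact: US1 | ].
  by rewrite PwE Pw_nil mul1r subrr; apply: B0.
case: (leqP i j) => Hij.
  exists (i :: j :: s'), 1; split; [ | exact: perm_refl | exact: US1 | ].
    by rewrite /srt /=; apply/andP; split.
  by rewrite mul1r [Pw x (i :: _)]PwE subrr; apply: B0.
have Hs' : srt s' := path_sorted Hs.
have IHs' := IH s' Hs' Hsz.
case: (Hcomm Hij) => c [Hc Hcu Hl].
case: (IHs' i) => t' [u' [Ht' Hp' [Hu' Hu'u] Hb']].
exists (j :: t'), (c * sig j u'); split.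
- rewrite /srt /= (path_sortedE (@leo_trans n)); apply/andP; split; last exact: Ht'.
  rewrite (perm_all _ Hp') /=.
  move: Hs; rewrite /srt /= (path_sortedE (@leo_trans n)) => /andP [-> _].
  by rewrite andbT /leo ltnW.
- apply: (@perm_trans _ (j :: i :: s')); first by rewrite perm_cons.
  by apply/permP => a /=; rewrite addnCA.
- exact: (USM (conj Hc Hcu) (USsig j (conj Hu' Hu'u))).
set l := x i * x j - c * x j * x i.
set D1 := x i * Pw x s' - u' * Pw x t'.
have e1 : x i * x j = l + c * x j * x i by rewrite subrK.
have e2 : x i * Pw x s' = D1 + u' * Pw x t' by rewrite subrK.
have E : x i * Pw x (j :: s') = l * Pw x s' + c * (x j * D1)
   + c * del j u' * Pw x t' + c * sig j u' * Pw x (j :: t').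
  rewrite PwE mulrA e1 mulrDl -[c * x j * x i * _]mulrA -[c * x j * _]mulrA e2.
  rewrite mulrDr mulrDr -addrA -addrA; congr (_ + (_ + _)).
  rewrite (mulrA (x j)) sigE // mulrDl mulrDr addrC; congr (_ + _).
    by rewrite PwE !mulrA.
  by rewrite !mulrA.
rewrite E addrK; apply: BD; first apply: BD.
- exact: linB.
- apply: BM => //; apply: (B2_of _ j Hb') => s0 Hs0 Hsz0.
  by apply: IH => //; apply: leq_trans Hsz0 _.
- by have := Bw (SM Hc (delS j Hu')) Ht'; rewrite (perm_size Hp').
Qed.

Lemma ins s : srt s -> InsP s.
Proof. by move=> Hs; apply: (@ins_all (size s).+1). Qed.

Lemma B2 d i a : B d a -> B d.+1 (x i * a).
Proof. by apply: B2_of => s Hs _; apply: ins. Qed.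

Lemma LT w : exists t u, [/\ srt t, perm_eq t w, US u & B (size w) (Pw x w - u * Pw x t)].
Proof.
elim: w => [|i w [t [u [Ht Hp Hu Hb]]]].
  exists [::], 1; split; [done | exact: perm_refl | exact: US1 | ].
  by rewrite mul1r subrr; apply: B0.
case: (ins Ht i) => t2 [v [Ht2 Hp2 Hv Hb2]].
exists t2, (sig i u * v); split => //.
- by apply: (perm_trans Hp2); rewrite perm_cons.
- exact: (USM (USsig i Hu) Hv).
set b := Pw x w - u * Pw x t.
set D2 := x i * Pw x t - v * Pw x t2.
have E : x i * Pw x w = x i * b + sig i u * D2 + del i u * Pw x t + sig i u * v * Pw x t2.
  rewrite -{1}(subrK (u * Pw x t) (Pw x w)) -/b mulrDr -addrA -addrA; congr (_ + _).
  case: Hu => Hu _.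
  rewrite mulrA sigE // mulrDl [del i u * _ + _]addrC addrA; congr (_ + _).
  by rewrite -mulrA -(subrK (v * Pw x t2) (x i * Pw x t)) -/D2 mulrDr mulrA.
rewrite PwE E addrK; apply: BD; first apply: BD.
- exact: B2.
- case: Hu => Hu _; apply: BM; first exact: sigS.
  by move: Hb2; rewrite (perm_size Hp).
- case: Hu => Hu _; have := Bw (delS i Hu) Ht.
  by rewrite (perm_size Hp).
Qed.

Lemma PwB w : B (size w).+1 (Pw x w).
Proof.
case: (LT w) => t [u [Ht Hp [Hu _] Hb]].
rewrite -(subrK (u * Pw x t) (Pw x w)); apply: BD; first exact: Bmono _ Hb.
by have := Bw Hu Ht; rewrite (perm_size Hp).
Qed.

Lemma comm_inj w r : r \in S -> r != 0 ->
  exists r', [/\ r' \in S, r' != 0 & B (size w) (Pw x w * r - r' * Pw x w)].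
Proof.
move=> Hr Hr0; elim: w => [|i w [r' [Hr' Hr'0 Hb]]].
  by exists r; split => //; rewrite Pw_nil mulr1 mul1r subrr; apply: B0.
exists (sig i r'); split; first exact: sigS.
  apply/eqP => E; case/eqP: Hr'0.
  have H := Hinj (i := i) (x := r') (y := 0).
  by apply: H; rewrite ?S0 // sig0.
set b := Pw x w * r - r' * Pw x w.
have E : Pw x (i :: w) * r = x i * b + del i r' * Pw x w + sig i r' * Pw x (i :: w).
  rewrite PwE -mulrA -(subrK (r' * Pw x w) (Pw x w * r)) -/b mulrDr -addrA.
  congr (_ + _); rewrite (mulrA (x i) r') sigE // mulrDl addrC.
  by rewrite mulrA.
rewrite E addrK; apply: BD; first exact: B2.
by apply: BM; [exact: delS | exact: PwB].
Qed.
Lemma comm_surj w c : c \in S ->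
  exists r, r \in S /\ B (size w) (Pw x w * r - c * Pw x w).
Proof.
elim: w c => [|i w IH] c Hc.
  by exists c; split => //; rewrite Pw_nil mulr1 mul1r subrr; apply: B0.
case: (IH (sinv i c) (sinvS i Hc)) => r [Hr Hb].
exists r; split => //.
set b := Pw x w * r - sinv i c * Pw x w.
have E : Pw x (i :: w) * r = x i * b + del i (sinv i c) * Pw x w + c * Pw x (i :: w).
  rewrite PwE -mulrA -(subrK (sinv i c * Pw x w) (Pw x w * r)) -/b mulrDr -addrA.
  congr (_ + _); rewrite (mulrA (x i)) sigE ?sinvS // mulrDl addrC sinvK //.
  by rewrite mulrA.
rewrite E addrK; apply: BD; first exact: B2.
by apply: BM; [exact: delS (sinvS i Hc) | exact: PwB].
Qed.

Lemma LTrev w : srt w -> exists u, US u /\ B (size w) (Pw x (rev w) - u * Pw x w).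
Proof.
move=> Hw; case: (LT (rev w)) => t [u [Ht Hp Hu Hb]].
have Etw : t = w.
  apply: (sorted_eq (@leo_trans n) (@leo_anti n)) => //.
  by rewrite (perm_trans Hp) // perm_rev.
by exists u; split => //; move: Hb; rewrite size_rev Etw.
Qed.

Lemma rev_top w r : srt w -> r \in S -> exists v,
  [/\ v \in S, (v = 0 -> r = 0) & B (size w) (Pw x (rev w) * r - v * Pw x w)].
Proof.
move=> Hw Hr; case: (eqVneq r 0) => [->|Hr0].
  by exists 0; split => //; [exact: S0 | rewrite mulr0 mul0r subrr; apply: B0].
case: (comm_inj (rev w) Hr Hr0) => r' [Hr' Hr'0 Hb].
case: (LTrev Hw) => u [[Hu [u' Hu' [E1 E2]]] Hb2].
exists (r' * u); split; first exact: SM.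
  move=> E; case/eqP: Hr'0.
  by rewrite -[r']mulr1 -E1 mulrA E mul0r.
have -> : Pw x (rev w) * r - r' * u * Pw x w =
  (Pw x (rev w) * r - r' * Pw x (rev w)) + r' * (Pw x (rev w) - u * Pw x w).
  by rewrite mulrBr addrA subrK mulrA.
apply: BD; last exact: BM.
by move: Hb; rewrite size_rev.
Qed.

Lemma rev_surj w c : srt w -> c \in S -> exists r,
  r \in S /\ B (size w) (c * Pw x w - Pw x (rev w) * r).
Proof.
move=> Hw Hc; case: (LTrev Hw) => u [[Hu [u' Hu' [E1 E2]]] Hb2].
case: (comm_surj (rev w) (SM Hc Hu')) => r [Hr Hb].
exists r; split => //.
have -> : c * Pw x w - Pw x (rev w) * r =
   - (c * u' * (Pw x (rev w) - u * Pw x w)) - (Pw x (rev w) * r - c * u' * Pw x (rev w)).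
  rewrite mulrBr opprB -!mulrA (mulrA u') E2 mul1r.
  by rewrite opprB addrA subrK.
apply: BB; first by apply: BN; apply: BM => //; exact: SM.
by move: Hb; rewrite size_rev.
Qed.

Definition evalR (L : seq (A * seq 'I_n)) := \sum_(p <- L) Pw x (rev p.2) * p.1.

Lemma spanR d a : B d a ->
  exists L, all (fun p => (p.1 \in S) && srt p.2) L /\ a = evalR L.
Proof.
elim: d a => [|d IH] a Ha.
  by exists [::]; rewrite (Bnil Ha) /evalR big_nil.
case: Ha => l [Hl ->].
suff [L [b [HL Hb E]]] : exists L b, [/\ all (fun p => (p.1 \in S) && srt p.2) L, B d b
    & evalL l = evalR L + b].
  case: (IH b Hb) => L2 [HL2 Eb].
  by exists (L ++ L2); rewrite all_cat HL HL2 E Eb /evalR big_cat.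
elim: l Hl => [|[r w] l IHl] /=.
  by exists [::], 0; split => //; [exact: B0 | rewrite /evalL /evalR !big_nil addr0].
case/andP => /and3P [/= Hr Hw Hsz] Hl.
case: (IHl Hl) => L [b [HL Hb E]].
case: (ltnP (size w) d) => Hwd.
  exists L, (r * Pw x w + b); split => //.
    by apply: BD => //; exact: Bmono Hwd (Bw Hr Hw).
  by rewrite /evalL big_cons -/(evalL l) E /= addrCA.
have Hwd' : size w = d by apply/eqP; rewrite eqn_leq Hwd andbT -ltnS.
case: (rev_surj Hw Hr) => r2 [Hr2 Hb2].
exists ((r2, w) :: L), ((r * Pw x w - Pw x (rev w) * r2) + b); split.
- by rewrite /= Hr2 Hw HL.
- by apply: BD => //; rewrite -Hwd'.
rewrite /evalL big_cons -/(evalL l) E /evalR big_cons -/(evalR L) /=.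
by rewrite addrACA [Pw x (rev w) * r2 + _]addrC subrK.
Qed.

Lemma freeR (s : seq (n.-tuple nat)) (c : n.-tuple nat -> A) :
  uniq s -> (forall al, c al \in S) ->
  \sum_(al <- s) Pw x (rev (word al)) * c al = 0 -> forall al, al \in s -> c al = 0.
Proof.
move=> Us Hc E.
have Hv : forall be, exists v, [/\ v \in S, v = 0 -> c be = 0 &
   B (size (word be)) (Pw x (rev (word be)) * c be - v * Pw x (word be))].
  by move=> be; apply: rev_top; [exact: word_sorted | exact: Hc].
pose vf be := proj1_sig (constructive_indefinite_description _ (Hv be)).
have Hvf : forall be, [/\ vf be \in S, vf be = 0 -> c be = 0 &
   B (size (word be)) (Pw x (rev (word be)) * c be - vf be * Pw x (word be))].
  by move=> be; exact: (proj2_sig (constructive_indefinite_description _ (Hv be))).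
have step : forall D, (forall be, be \in s -> (D < size (word be))%N -> c be = 0) ->
    forall al, al \in s -> size (word al) = D -> c al = 0.
  move=> D HD al als Hal.
  pose T be := Pw x (rev (word be)) * c be.
  pose X be := if size (word be) == D then vf be * Pw x (word be) else 0.
  have HR : B D (\sum_(be <- s) (T be - X be)).
    apply: Bsum => be bes; case: (Hvf be) => Hv1 Hv2 Hv3; rewrite /X.
    case: eqP => Hd; first by rewrite -Hd.
    rewrite subr0; case: (ltngtP (size (word be)) D) => H //.
      rewrite -(subrK (vf be * Pw x (word be)) (T be)); apply: BD.
        exact: Bmono (ltnW H) Hv3.
      exact: Bmono H (Bw Hv1 (word_sorted be)).
    by rewrite /T (HD be bes H) mulr0; apply: B0.
  have HX : B D (\sum_(be <- s) X be).
    have -> : \sum_(be <- s) X be = - \sum_(be <- s) (T be - X be).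
      by rewrite sumrB E sub0r opprK.
    exact: BN.
  case: HX => l2 [Hl2 EX].
  pose l := [seq (if size (word be) == D then vf be else 0, word be) | be <- s]
            ++ [seq (- p.1, p.2) | p <- l2].
  have El : evalL l = 0.
    rewrite /evalL big_cat !big_map /=.
    have -> : \sum_(j <- s) (if size (word j) == D then vf j else 0) * Pw x (word j)
              = \sum_(be <- s) X be.
      by apply: eq_bigr => be _; rewrite /X; case: ifP => //; rewrite mul0r.
    rewrite EX /evalL -big_split /= big1 // => p _.
    by rewrite mulNr addrN.
  have Hl : all (fun p => (p.1 \in S) && srt p.2) l.
    rewrite all_cat !all_map; apply/andP; split; apply/allP => p pl /=.
      rewrite /srt word_sorted andbT; case: ifP => _; [by case: (Hvf p) | exact: S0].
    by case/and3P: (allP Hl2 p pl) => H1 H2 _; rewrite H2 SN.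
  have := Uniq Hl El (word_sorted al).
  rewrite big_cat !big_map /=.
  rewrite (eq_bigl (fun be => al == be)); last first.
    by move=> be; rewrite /= (inj_eq (@word_inj n)) eq_sym.
  rewrite sum_pred1_seq // Hal eqxx.
  rewrite big_seq_cond big1 ?addr0; last first.
    move=> p /andP [pl /eqP E2]; case/and3P: (allP Hl2 p pl) => _ _.
    by rewrite E2 Hal ltnn.
  by case: (Hvf al) => _ H _ /H.
pose M := \sum_(be <- s) (size (word be)).+1.
have HM : forall be, be \in s -> (size (word be) < M)%N.
  by move=> be bes; rewrite /M (bigD1_seq be) //= leq_addr.
have K : forall k al, al \in s -> (M <= size (word al) + k)%N -> c al = 0.
  elim=> [|k IHk] al als Hk.
    by have := HM al als; rewrite ltnNge -(addn0 (size _)) Hk.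
  case: (leqP M (size (word al) + k)) => H; first exact: IHk.
  apply: (step (size (word al))) => // be bes Hbe.
  apply: IHk => //; apply: leq_trans Hk _.
  by rewrite addnS -addSn leq_add2r.
by move=> al als; apply: (K M) => //; rewrite leq_addl.
Qed.

Definition lin z := in_lin S x z.

Lemma linD a b : lin a -> lin b -> lin (a + b).
Proof.
move=> [r0 [r [H0 [Hr ->]]]] [r0' [r' [H0' [Hr' ->]]]].
exists (r0 + r0'), (fun k => r k + r' k); split; first exact: SD.
split; first by move=> k; apply: SD.
rewrite addrACA; congr (_ + _); rewrite -big_split /=.
by apply: eq_bigr => k _; rewrite mulrDl.
Qed.

Lemma linM r z : r \in S -> lin z -> lin (r * z).
Proof.
move=> Hr [r0 [rk [H0 [Hrk ->]]]].
exists (r * r0), (fun k => r * rk k); split; first exact: SM.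
split; first by move=> k; apply: SM.
by rewrite mulrDr mulr_sumr; congr (_ + _); apply: eq_bigr => k _; rewrite mulrA.
Qed.

Lemma linN z : lin z -> lin (- z).
Proof. by move=> H; rewrite -mulN1r; apply: linM => //; apply: SN; exact: S1. Qed.

Lemma linS a b : lin a -> lin b -> lin (a - b).
Proof. by move=> Ha Hb; apply: linD => //; exact: linN. Qed.

Lemma linC r : r \in S -> lin r.
Proof.
move=> Hr; exists r, (fun _ => 0); split => //; split; first by move=> _; exact: S0.
by rewrite big1 ?addr0 // => k _; rewrite mul0r.
Qed.

Lemma linX r k : r \in S -> lin (r * x k).
Proof.
move=> Hr; exists 0, (fun j => if j == k then r else 0); split; first exact: S0.
split; first by move=> j; case: ifP => _ //; exact: S0.
rewrite add0r (bigD1 k) //= eqxx big1 ?addr0 // => j /negbTE ->.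
by rewrite mul0r.
Qed.

Lemma lin_conv z : lin z -> in_lin (A := A^c) S x z.
Proof.
move=> [r0 [r [H0 [Hr ->]]]].
exists (r0 - \sum_(k < n) del k (sinv k (r k))), (fun k => sinv k (r k)).
split; first by apply: SB => //; apply: Ssum => k _; apply: delS; exact: sinvS.
split; first by move=> k; exact: sinvS.
change (r0 + \sum_(k < n) r k * x k =
  r0 - \sum_(k < n) del k (sinv k (r k)) + \sum_(k < n) x k * sinv k (r k)).
rewrite -addrA; congr (_ + _).
rewrite addrC -sumrB; apply: eq_bigr => k _.
by rewrite sigE ?sinvS // sinvK // addrK.
Qed.

Lemma swap_lin i j a : a \in S -> exists R, lin R /\
  x j * (x i * sinv i (sinv j a)) = a * (x j * x i) + R.
Proof.
move=> Ha; set c1 := sinv j a; set c := sinv i c1.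
have Hc1 : c1 \in S by exact: sinvS.
have Hc : c \in S by exact: sinvS.
exists (del j c1 * x i + (sig j (del i c) * x j + del j (del i c))); split.
  apply: linD; first by apply: linX; exact: delS.
  apply: linD; first by apply: linX; apply: sigS; exact: delS.
  by apply: linC; apply: delS; exact: delS.
have e1 : x i * c = c1 * x i + del i c by rewrite sigE // /c sinvK.
have e2 : x j * c1 = a * x j + del j c1 by rewrite sigE // /c1 sinvK.
rewrite e1 mulrDr mulrA e2 (sigE j (delS i Hc)) mulrDl.
by rewrite -addrA -mulrA.
Qed.

Lemma assoc_op i sigma delta sigma_inv : assoc_maps S x i sigma delta ->
  (forall r, r \in S -> sigma_inv r \in S /\ sigma (sigma_inv r) = r) ->
  assoc_maps (A := A^c) S x i sigma_inv (fun r => - delta (sigma_inv r)).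
Proof.
move=> Has Hinv r Hr; case: (Hinv r Hr) => H1 H2; case: (Has _ H1) => Hs Hd E.
split => //; first exact: SN.
change (@GRing.mul A r (x i) = x i * sigma_inv r - delta (sigma_inv r)).
by rewrite E H2 addrK.
Qed.

Hypothesis Hspan : mon_spans S x.
Hypothesis Hiv : forall i j : 'I_n, exists c,
  [/\ c \in S, c != 0 & in_lin S x (x j * x i - c * x i * x j)].

Lemma final : bijective_skewPBW (A := A^c) S x.
Proof.
split.
- split.
  + split; [exact: S1 | move=> a b Ha Hb; exact: SB | move=> a b Ha Hb; exact: SM Hb Ha].
  + move=> a; case: (Hspan a) => s0 [c0 [Hc0 Ea]].
    have Ba : B (\sum_(al <- s0) (size (word al)).+1) a.
      exists [seq (c0 al, word al) | al <- s0]; split.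
        rewrite all_map; apply/allP => al als.
        by rewrite /okL /= Hc0 /srt word_sorted (big_rem al) //= leq_addr.
      rewrite Ea /evalL big_map; apply: eq_bigr => al _; by rewrite monomE.
    case: (spanR Ba) => L [HL EL].
    exists (undup [seq cnt p.2 | p <- L]), (fun al => \sum_(p <- L | cnt p.2 == al) p.1).
    split.
      move=> al; rewrite big_seq_cond; apply: Ssum => p /andP [pl _].
      by case/andP: (allP HL p pl).
    rewrite EL.
    transitivity (\sum_(al <- undup [seq cnt p.2 | p <- L])
       Pw x (rev (word al)) * \sum_(p <- L | cnt p.2 == al) p.1); last first.
      by apply: eq_bigr => al _; rewrite monomE Pw_conv.
    symmetry.
    transitivity (\sum_(al <- undup [seq cnt p.2 | p <- L]) \sum_(p <- L)
      (if cnt p.2 == al then Pw x (rev (word al)) * p.1 else 0)).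
      apply: eq_bigr => al _; rewrite mulr_sumr big_mkcond /=.
      by apply: eq_bigr => p _; case: ifP => //; rewrite mulr0.
    rewrite exchange_big /= /evalR big_seq [RHS]big_seq; apply: eq_bigr => p pl.
    rewrite -big_mkcond /= sum_pred1_seq ?undup_uniq //.
      by case/andP: (allP HL p pl) => _ Hs; rewrite word_cnt.
    by rewrite mem_undup; apply: (map_f (fun p : A * seq _ => cnt p.2)).
  + move=> s0 c Us Hc E al als; apply: (freeR Us Hc _ als).
    rewrite -[RHS]E; apply: eq_bigr => al' _; by rewrite monomE Pw_conv.
  + move=> i r Hr Hr0; exists (sinv i r); split; first exact: sinvS.
      apply/eqP => E0; case/eqP: Hr0; by rewrite -(sinvK i Hr) E0 sig0.
    change (@GRing.mul A r (x i) - x i * sinv i r \in S).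
    rewrite sigE ?sinvS // sinvK // opprD addrA subrr sub0r.
    by apply: SN; apply: delS; exact: sinvS.
  + move=> i j; case: (Hiv j i) => c0 [Hc0 Hc00 Hl].
    exists (sinv i (sinv j c0)); split; first by apply: sinvS; exact: sinvS.
      apply/eqP => E0; case/eqP: Hc00.
      have E1 : sinv j c0 = 0 by rewrite -(sinvK i (sinvS j Hc0)) E0 sig0.
      by rewrite -(sinvK j Hc0) E1 sig0.
    apply: lin_conv.
    change (lin (x i * x j - x j * (x i * sinv i (sinv j c0)))).
    case: (swap_lin i j Hc0) => R [HR ->].
    have -> : x i * x j - (c0 * (x j * x i) + R) = (x i * x j - c0 * x j * x i) - R.
      by rewrite opprD addrA mulrA.
    exact: linS.
- move=> i; exists (sinv i), (fun r => - del i (sinv i r)); split.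
    exact: assoc_op (Hass i) (Hsinv i).
  split.
    move=> a b Ha Hb E0; by rewrite -(sinvK i Ha) E0 sinvK.
  move=> s0 Hs0; exists (sig i s0); [exact: sigS | exact: sig_sinv].
- move=> i j Hij; case: (Hcomm Hij) => c0 [Hc0 [d0 Hd0 [E1 E2]] Hl].
  exists (sinv i (sinv j d0)); split; first by apply: sinvS; exact: sinvS.
    have [Hu [e He [F1 F2]]] := USsinv i (USsinv j (conj Hd0 (ex_intro2 _ _ c0 Hc0 (conj E2 E1)))).
    by exists e.
  apply: lin_conv.
  change (lin (x i * x j - x j * (x i * sinv i (sinv j d0)))).
  case: (swap_lin i j Hd0) => R [HR ->].
  have e3 : d0 * (c0 * x i * x j) = x i * x j by rewrite -!mulrA mulrA E2 mul1r.
  have -> : x i * x j - (d0 * (x j * x i) + R) = - (d0 * (x j * x i - c0 * x i * x j)) - R.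
    by rewrite opprD addrA mulrBr e3 opprB.
  apply: linS => //; apply: linN; exact: linM.
Qed.

End Main.

Theorem proposition4p1 (A : nzRingType) (S : pred A) (n : nat) (x : 'I_n -> A) :
  bijective_skewPBW S x ->
  bijective_skewPBW (A := A^c) S x /\
  (forall (i : 'I_n) (sigma delta sigma_inv : A -> A),
      assoc_maps S x i sigma delta ->
      (forall r, r \in S -> sigma_inv r \in S /\ sigma (sigma_inv r) = r) ->
      assoc_maps (A := A^c) S x i sigma_inv (fun r => - delta (sigma_inv r))).
Proof.
move=> [[HS Hspan Hfree Hiii Hiv] Hbij Hcomm].
split; last first.
  by move=> i sigma delta sigma_inv Has Hinv; exact (assoc_op HS Has Hinv).
have Hsd : forall i, exists sd : (A -> A) * (A -> A),
    assoc_maps S x i sd.1 sd.2 /\ bijective_on_S S sd.1.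
  by move=> i; case: (Hbij i) => sg [dl [H1 H2]]; exists (sg, dl).
pose sd i := proj1_sig (constructive_indefinite_description _ (Hsd i)).
have Hsdp : forall i, assoc_maps S x i (sd i).1 (sd i).2 /\ bijective_on_S S (sd i).1.
  by move=> i; exact: (proj2_sig (constructive_indefinite_description _ (Hsd i))).
have Hsinv_ex : forall i r, exists r0, r \in S -> r0 \in S /\ (sd i).1 r0 = r.
  move=> i r; case: (boolP (r \in S)) => Hr; last by exists 0.
  case: (Hsdp i) => _ [_ Hsurj]; case: (Hsurj r Hr) => r0 Hr0 E.
  by exists r0.
pose sinv i r := proj1_sig (constructive_indefinite_description _ (Hsinv_ex i r)).
apply: (@final A S n x (fun i => (sd i).1) (fun i => (sd i).2) sinv) => //.
- by move=> i; exact: (proj1 (Hsdp i)).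
- by move=> i; exact: (proj1 (proj2 (Hsdp i))).
- move=> i r Hr.
  exact: (proj2_sig (constructive_indefinite_description _ (Hsinv_ex i r)) Hr).
Qed.
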